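(* Let $B$ be a Ferrers board with $n$ columns, and let $M$ be the maximum entry of its root vector $\xi(B)$. If the first occurrence of $M$ in $\xi(B)$ is in position $j$, then $B$ is connected by a sequence of edges in the rook equivalence graph $G(B)$ to a Ferrers board $B'$ whose root vector $\xi(B')$ agrees with $\xi(B)$ in the first $j$ positions and is weakly decreasing in the positions $i\ge j$.
   Context: A Ferrers board is given by a weakly increasing sequence of non-negative integers $B=(b_1,\ldots,b_n)$ of column heights; it is the set of unit cells in the first quadrant lying in column $i$ and rows $1,\ldots,b_i$. Prepending columns of height $0$ on the left does not change the board, and boards are compared using the same number of columns by such padding. A placement of $k$ rooks on $B$ is a set of $k$ cells of $B$ no two in the same row or column; $r_k(B)$ is the number of such placements. Two boards are rook equivalent if they have equal $r_k$ for all $k\ge 0$. The root vector of $B$ is $\xi(B)=\langle 0-b_1,1-b_2,\ldots,(n-1)-b_n\rangle$. The rook equivalence graph $G(B)$ has as vertices all Ferrers boards rook equivalent to $B$, and $\{B_1,B_2\}$ is an edge iff, written with the same number of columns, $B_1$ and $B_2$ differ in exactly two columns $i$ and $j$, where $B_1$ has $k$ more cells than $B_2$ in column $i$ and $k$ fewer cells than $B_2$ in column $j$, for some $k>0$. *)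

(* Defs.v *)
From mathcomp Require Import all_boot all_order all_algebra.
Set Implicit Arguments. Unset Strict Implicit. Unset Printing Implicit Defensive.
Import Order.TTheory GRing.Theory Num.Theory.

(* A Ferrers board is represented by the list [b_1; ...; b_n] of its column
   heights (column i+1 of the paper is index i here, 0-based). *)
Definition ferrers (b : seq nat) : bool := sorted leq b.

(* Cells of the board: pairs (column i, row r) with r < b_i (0-based rows).
   All rows are < sumn b, so 'I_(size b) * 'I_(sumn b) contains every cell. *)
Definition cell (b : seq nat) (c : 'I_(size b) * 'I_(sumn b)) : bool :=
  (c.2 < nth 0 b c.1)%N.

Definition placement (b : seq nat) (P : {set 'I_(size b) * 'I_(sumn b)}) : bool :=
  [forall c in P, cell c] &&
  [forall c in P, forall d in P, (c != d) ==> (c.1 != d.1) && (c.2 != d.2)].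

Definition rook_num (b : seq nat) (k : nat) : nat :=
  #|[set P : {set 'I_(size b) * 'I_(sumn b)} | placement P && (#|P| == k)]|.

Definition rook_equiv (b1 b2 : seq nat) : Prop :=
  forall k, rook_num b1 k = rook_num b2 k.

Definition root_vec (b : seq nat) : seq int :=
  [seq (i%:Z - (nth 0 b i)%:Z)%R | i <- iota 0 (size b)].

Definition pad (N : nat) (b : seq nat) : seq nat := nseq (N - size b) 0 ++ b.

Definition rg_edge (b1 b2 : seq nat) : Prop :=
  let N := maxn (size b1) (size b2) in
  let c1 := pad N b1 in let c2 := pad N b2 in
  exists i j k, [/\ [&& (i < N)%N, (j < N)%N & (0 < k)%N],
    nth 0 c1 i = nth 0 c2 i + k, nth 0 c2 j = nth 0 c1 j + k &
    (forall l, l != i -> l != j -> nth 0 c1 l = nth 0 c2 l)].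

Definition rg_vertex (B b : seq nat) : Prop := ferrers b /\ rook_equiv B b.

Inductive rg_connected (B : seq nat) : seq nat -> seq nat -> Prop :=
| rgc_refl b : rg_connected B b b
| rgc_step b1 b2 b3 : rg_vertex B b1 -> rg_vertex B b2 -> rg_edge b1 b2 ->
    rg_connected B b2 b3 -> rg_connected B b1 b3.

(* Main.v *)
Require Import Defs.
From mathcomp Require Import all_boot all_order all_algebra.
From mathcomp Require Import zify ring lra.
Set Implicit Arguments. Unset Strict Implicit. Unset Printing Implicit Defensive.
Import Order.TTheory GRing.Theory Num.Theory.

Section Count.
Variables (n N : nat) (h : nat -> nat).
Local Notation T := ('I_n * 'I_N)%type.

Definition okp (m : nat) (P : {set T}) : bool :=
  [forall c in P, (c.1 < m) && (c.2 < h c.1)] &&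
  [forall c in P, forall d in P, (c != d) ==> (c.1 != d.1) && (c.2 != d.2)].

Definition AA m k := [set P : {set T} | okp m P && (#|P| == k)].

Lemma okpP m (P : {set T}) : reflect ((forall c, c \in P -> (c.1 < m) /\ (c.2 < h c.1)) /\
   (forall c d, c \in P -> d \in P -> c != d -> (c.1 != d.1) /\ (c.2 != d.2))) (okp m P).
Proof.
apply: (iffP andP) => [[/forall_inP H1 /forall_inP H2]|[H1 H2]]; split.
- by move=> c /H1 /andP.
- by move=> c d /H2 /forall_inP H /H /implyP H' /H' /andP.
- by apply/forall_inP => c /H1 [-> ->].
- apply/forall_inP => c cP; apply/forall_inP => d dP; apply/implyP => cd.
  by have [-> ->] := H2 c d cP dP cd.
Qed.

Lemma card_AA_0 m : #|AA m 0| = 1.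
Proof.
suff -> : AA m 0 = [set set0] by rewrite cards1.
apply/setP => P; rewrite !inE.
apply/idP/idP.
- by case/andP => _ /eqP/cards0_eq ->.
- move/eqP => ->; rewrite cards0 eqxx andbT.
  by apply/okpP; split => [c|c d]; rewrite inE.
Qed.

Lemma card_AA0 k : #|AA 0 k.+1| = 0.
Proof.
apply/eqP; rewrite cards_eq0; apply/eqP/setP => P; rewrite !inE.
apply/negbTE; apply/negP => /andP[/okpP[H1 _] /eqP cP].
have : (0 < #|P|) by rewrite cP.
by case/card_gt0P => c /H1 [].
Qed.

Lemma card_ltord t : t <= N -> #|[set r : 'I_N | r < t]| = t.
Proof.
move=> tN.
have -> : [set r : 'I_N | r < t] = [set widen_ord tN r | r : 'I_t].
  apply/setP => r; rewrite !inE; apply/idP/imsetP.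
  - by move=> rt; exists (Ordinal rt) => //; apply: val_inj.
  - by case=> r' _ ->; rewrite /= ltn_ord.
rewrite card_imset ?card_ord //.
by move=> a b /(congr1 val) /= /val_inj.
Qed.

Lemma card_AA_S m k : m < n -> h m <= N -> (forall i, i < m -> h i <= h m) ->
  #|AA m.+1 k.+1| = #|AA m k.+1| + (h m - k) * #|AA m k|.
Proof.
move=> mn hN hmono.
set mo : 'I_n := Ordinal mn.
set E := [set P : {set T} | [exists c in P, c.1 == mo]].
rewrite -(cardsID E (AA m.+1 k.+1)) addnC.
congr (_ + _).
  congr #|pred_of_set _|; apply/setP => P; rewrite !inE.
  apply/idP/idP.
  - case/andP => /existsPn HE /andP[/okpP[H1 H2] ->]; rewrite andbT.
    idtac.
    apply/okpP; split => // c cP.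
    have [c1 c2] := H1 c cP; split => //.
    have := HE c; rewrite cP /=; move/eqP => ne.
    rewrite ltn_neqAle -ltnS c1 andbT; apply/eqP => e; apply: ne; exact: val_inj.
  - case/andP => /okpP[H1 H2] ->; rewrite andbT; apply/andP; split; last first.
      apply/okpP; split => // c cP; have [c1 c2] := H1 c cP; split => //; exact: ltnW.
    apply/existsPn => c; apply/negP => /andP[cP /eqP e].
    by have [] := H1 c cP; rewrite e /= ltnn.
set rows := fun Q : {set T} => [set c.2 | c in Q].
set D := [set p : {set T} * 'I_N | [&& p.1 \in AA m k, p.2 < h m & p.2 \notin rows p.1]].
set f := fun p : {set T} * 'I_N => (mo, p.2) |: p.1.
have colQ : forall Q c, Q \in AA m k -> c \in Q -> c.1 < m.
  by move=> Q c; rewrite inE => /andP[/okpP[H1 _] _] /H1 [].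
have -> : AA m.+1 k.+1 :&: E = f @: D.
  apply/setP => P; rewrite !inE; apply/idP/imsetP.
  - case/andP => /andP[/okpP[H1 H2] /eqP cP] /existsP[c /andP[cinP /eqP c1]].
    exists (P :\ c, c.2); last by rewrite /f /= -c1 -surjective_pairing setD1K.
    rewrite inE /=; apply/and3P; split.
    + rewrite inE; apply/andP; split; last first.
        by move: cP; rewrite (cardsD1 c) cinP add1n => -[->].
      apply/okpP; split.
      * move=> d; rewrite !inE => /andP[dc dP]; have [d1 d2] := H1 d dP; split => //.
        have [ne _] := H2 d c dP cinP dc.
        rewrite ltn_neqAle -ltnS d1 andbT; apply: contra ne => /eqP e.
        by rewrite c1; apply/eqP; apply: val_inj.
      * move=> d e; rewrite !inE => /andP[_ dP] /andP[_ eP]; exact: H2.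
    + by have [_] := H1 c cinP; rewrite c1.
    + apply/imsetP => -[d]; rewrite !inE => /andP[dc dP] e.
      by have [_ ] := H2 d c dP cinP dc; rewrite e eqxx.
  - case=> [[Q r]]; rewrite inE /= => /and3P[QA rh rQ] ->.
    have QA' := QA; rewrite inE in QA'; case/andP: QA' => /okpP[H1 H2] /eqP cQ.
    have mQ : (mo, r) \notin Q.
      by apply/negP => /(colQ _ _ QA) /=; rewrite ltnn.
    rewrite /f /=; apply/andP; split; last first.
      apply/existsP. exists (mo, r). by rewrite !inE /= !eqxx.
    rewrite cardsU1 mQ cQ eqxx andbT.
    apply/okpP; split.
    + move=> c; rewrite !inE => /orP[/eqP -> /=|cP]; first by split.
      by have [c1 c2] := H1 c cP; split => //; apply: ltnW.
    + have key : forall c, c \in Q -> (c.1 != mo) /\ (c.2 != r).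
        move=> c cP; split.
          by apply/negP => /eqP e; have := colQ _ _ QA cP; rewrite e /= ltnn.
        apply/negP => /eqP e; move: rQ; rewrite -e; apply/negP/negPn.
        by apply/imsetP; exists c.
      move=> c d; rewrite !inE => /orP[/eqP ->|cP] /orP[/eqP ->|dP] cd.
      * by rewrite eqxx in cd.
      * by have [a b] := key d dP; split; rewrite eq_sym.
      * exact: key.
      * exact: H2.
rewrite card_in_imset; last first.
  move=> [Q1 r1] [Q2 r2] HD1 HD2 e.
  move: HD1; rewrite inE /= => /and3P[A1 _ _].
  move: HD2; rewrite inE /= => /and3P[A2 _ _].
  have eQ : forall Q r, Q \in AA m k -> Q = [set c in (mo, r) |: Q | c.1 != mo].
    move=> Q r QA; apply/setP => c; rewrite !inE.
    case: (boolP (c \in Q)) => cQ.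
      rewrite orbT /=; apply/esym/negP => /eqP ee.
      by have := colQ _ _ QA cQ; rewrite ee /= ltnn.
    by rewrite orbF; case: eqP => // ->; rewrite eqxx.
  have er : r1 = r2.
    have : (mo, r1) \in (mo, r2) |: Q2 by rewrite -/(f (Q2, r2)) -e !inE eqxx.
    rewrite !inE => /orP[/eqP [] //|/(colQ _ _ A2)] /=; by rewrite ltnn.
  rewrite /f /= in e.
  by rewrite (eQ _ r1 A1) (eQ _ r2 A2) e er.
have -> : #|D| = \sum_(Q in AA m k) #|[set r : 'I_N | (r < h m) && (r \notin rows Q)]|.
  rewrite -[#|D|]sum1_card.
  under [RHS]eq_bigr => Q _ do rewrite -sum1dep_card.
  rewrite pair_big_dep /=.
  apply: eq_bigl => -[Q r]; rewrite !inE /=.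
  by [].
rewrite mulnC -sum_nat_const; apply: eq_bigr => Q QA.
have QA' := QA; rewrite inE in QA'; case/andP: QA' => /okpP[H1 H2] /eqP cQ.
have -> : [set r : 'I_N | (r < h m) && (r \notin rows Q)] = [set r : 'I_N | r < h m] :\: rows Q.
  by apply/setP => r; rewrite !inE andbC.
rewrite cardsD card_ltord //.
have -> : [set r : 'I_N | r < h m] :&: rows Q = rows Q.
  apply/setIidPr/subsetP => r /imsetP[c cP ->]; rewrite inE.
  have [c1 c2] := H1 c cP; apply: leq_trans c2 _; exact: hmono.
rewrite card_in_imset ?cQ //.
move=> c d cP dP e; apply/eqP; apply/negPn/negP => cd.
by have [_ ] := H2 c d cP dP cd; rewrite e eqxx.
Qed.

Fixpoint RR (m k : nat) : nat :=
  match m with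
  | 0 => (k == 0 : nat)
  | m'.+1 => match k with 0 => 1 | k'.+1 => RR m' k'.+1 + (h m' - k') * RR m' k' end
  end.

Lemma card_AA_RR m k : m <= n -> (forall i, i < m -> h i <= N) ->
  (forall i i', i <= i' < m -> h i <= h i') -> #|AA m k| = RR m k.
Proof.
elim: m k => [|m IH] k mn hN hm.
  by case: k => [|k]; rewrite ?card_AA_0 ?card_AA0.
case: k => [|k]; first by rewrite card_AA_0.
have hN' : forall i, i < m -> h i <= N by move=> i im; apply: hN; exact: ltnW.
have hm' : forall i i', i <= i' < m -> h i <= h i'.
  by move=> i i' /andP[a b]; apply: hm; rewrite a ltnW.
have hmm : forall i, i < m -> h i <= h m.
  by move=> i im; apply: hm; rewrite (ltnW im) ltnSn.
rewrite (card_AA_S k mn (hN m (ltnSn m)) hmm) /= !IH //; exact: ltnW.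
Qed.

End Count.

Lemma nth_le_sumn (b : seq nat) i : nth 0 b i <= sumn b.
Proof.
elim: b i => [|x b IH] [|i] //=; first exact: leq_addr.
by apply: leq_trans (IH i) _; apply: leq_addl.
Qed.

Lemma rook_num_RR b k : ferrers b -> rook_num b k = RR (nth 0 b) (size b) k.
Proof.
move=> fb.
rewrite -(@card_AA_RR (size b) (sumn b)) //.
- rewrite /rook_num; apply: eq_card => P; rewrite !inE.
  congr (_ && _); rewrite /placement /okp; congr (_ && _).
  by apply: eq_forallb => c; rewrite ltn_ord.
- by move=> i _; apply: nth_le_sumn.
- move=> i i' /andP[a b']; apply: (sorted_leq_nth leq_trans leqnn) => //.
  + by rewrite inE (leq_ltn_trans a b').
Qed.

Lemma RR_gt h m k : m < k -> RR h m k = 0.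
Proof.
elim: m k => [|m IH] [|k] //= mk.
rewrite (IH k) // (IH k.+1) ?muln0 //; exact: leqW.
Qed.

Lemma RR_gt_h h m k H : (forall i, i < m -> h i <= H) -> H < k -> RR h m k = 0.
Proof.
elim: m k => [|m IH] [|k] hH Hk //=; try by rewrite ltn0 in Hk.
rewrite IH //; last by move=> i im; apply: hH; apply: ltnW.
have : h m <= k by apply: leq_trans (hH m (ltnSn m)) _.
by rewrite -subn_eq0 => /eqP ->.
Qed.

Lemma RR0 h m : RR h m 0 = 1%N.
Proof. by case: m. Qed.

Local Open Scope ring_scope.

Lemma ffS (x j : nat) : ((x ^_ j.+1)%N%:Z = (x ^_ j)%N%:Z * (x%:Z - j%:Z)).
Proof.
case: (leqP j x) => jx.
  by rewrite ffactnSr PoszM subzn.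
by rewrite (ffact_small jx) (@ffact_small x j.+1 (ltnW jx)) mul0r.
Qed.

Lemma RR_ident (h : nat -> nat) (x : nat) m K : (m < K)%N ->
  (forall i i', (i <= i')%N -> (i' < m)%N -> (h i <= h i')%N) ->
  \sum_(k < K) (RR h m k)%:Z * (x ^_ (m - k))%N%:Z =
  \prod_(i < m) (x%:Z + (h i)%:Z - i%:Z).
Proof.
elim: m K => [|m IH] K mK hm.
  case: K mK => [|K] // _; rewrite big_ord_recl big1 ?big_ord0 /=.
    by rewrite ffactn0 mulr1 addr0.
  by move=> i _; rewrite /=.
case: K mK => [|[|K]] // mK.
have hm' : forall i i', (i <= i')%N -> (i' < m)%N -> (h i <= h i')%N.
  by move=> i i' a b; apply: hm => //; apply: ltnW.
rewrite [RHS]big_ord_recr /= -(IH K.+1) // big_distrl /=.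
rewrite [LHS]big_ord_recl /= subn0.
have T1 : forall i : nat, (RR h m i)%:Z * (x ^_ (m - i))%N%:Z * (x%:Z + (h m)%:Z - m%:Z)
   = (RR h m i)%:Z * (x ^_ (m.+1 - i))%N%:Z + (h m - i)%N%:Z * (RR h m i)%:Z * (x ^_ (m - i))%N%:Z.
  move=> i.
  case: (leqP i m) => im; last by rewrite RR_gt // !mul0r mulr0 !mul0r addr0.
  case: (leqP i (h m)) => ih; last first.
    rewrite (@RR_gt_h h m i (h m)) // ?mulr0 ?mul0r ?addr0 //.
    by move=> i' i'm; apply: hm => //; apply: ltnW.
  rewrite subSn // ffS -(subzn im) -(subzn ih); ring.
under [RHS]eq_bigr do rewrite T1.
rewrite big_split /=.
have b0 : forall i, bump 0 i = i.+1 by move=> i; rewrite /bump leq0n add1n.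
under [in LHS]eq_bigr => i _ do rewrite b0 add0n subSS PoszD PoszM mulrDl.
rewrite big_split /= addrA; congr (_ + _).
rewrite [in RHS]big_ord_recl /= subn0 RR0 mul1r; congr (_ + _).
rewrite big_ord_recr /= RR_gt ?mul0r ?addr0 //.
Qed.

Lemma invert (d : nat -> int) m :
  (forall x : nat, \sum_(k < m.+1) d k * (x ^_ (m - k))%N%:Z = 0) ->
  forall k, (k <= m)%N -> d k = 0.
Proof.
move=> H.
suff S : forall t, (t <= m)%N -> d (m - t)%N = 0.
  by move=> k km; rewrite -(subKn km); apply: S; apply: leq_subr.
elim/ltn_ind => t IH tm.
have := H t.
have tm' : (m - t < m.+1)%N by rewrite ltnS leq_subr.
rewrite (bigD1 (Ordinal tm')) //= big1 ?addr0.
  rewrite subKn // ffactnn => /eqP; rewrite mulf_eq0 => /orP[/eqP //|].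
  rewrite -[_ == 0]/(_ == Posz 0) eqz_nat. by rewrite eqn0Ngt fact_gt0.
move=> k /eqP kne.
have km : (k <= m)%N by rewrite -ltnS ltn_ord.
case: (ltngtP k (m - t)) => kt.
- by rewrite ffact_small ?mulr0 //; lia.
- rewrite -(subKn km) IH ?mul0r //; lia.
- by exfalso; apply: kne; apply: val_inj.
Qed.

Lemma prod_root (b : seq nat) (x : nat) n : n = size b ->
  \prod_(i < n) (x%:Z + (nth 0%N b i)%:Z - i%:Z) =
  \prod_(z <- root_vec b) (x%:Z - z).
Proof.
move=> ->; rewrite /root_vec big_map.
have -> : iota 0 (size b) = index_iota 0 (size b) by rewrite /index_iota subn0.
rewrite big_mkord; apply: eq_bigr => i _; ring.
Qed.

Lemma ferrers_mono (b : seq nat) : ferrers b ->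
  forall i i', (i <= i')%N -> (i' < size b)%N -> (nth 0%N b i <= nth 0%N b i')%N.
Proof.
move=> fb i i' ii' i'n.
apply: (sorted_leq_nth leq_trans leqnn) => //.
by rewrite inE (leq_ltn_trans ii' i'n).
Qed.


Lemma rook_equiv_perm (b1 b2 : seq nat) : ferrers b1 -> ferrers b2 ->
  size b1 = size b2 -> perm_eq (root_vec b1) (root_vec b2) -> rook_equiv b1 b2.
Proof.
move=> f1 f2 sz pe k.
rewrite !rook_num_RR // -sz.
set n := size b1.
case: (leqP k n) => kn; last by rewrite !RR_gt.
apply/eqP; rewrite -eqz_nat -subr_eq0; apply/eqP.
apply: (@invert (fun k => (RR (nth 0%N b1) n k)%:Z - (RR (nth 0%N b2) n k)%:Z) n _ k kn).
move=> x.
under eq_bigr do rewrite mulrBl.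
rewrite sumrB !RR_ident //.
- by rewrite (prod_root _ (erefl _)) (prod_root _ sz) (perm_big _ pe) subrr.
- by move=> i i' a b; apply: ferrers_mono => //; rewrite -sz.
- by move=> i i' a b; apply: ferrers_mono.
Qed.



Lemma nth_rv (b : seq nat) k : (k < size b)%N ->
  nth 0 (root_vec b) k = k%:Z - (nth 0%N b k)%:Z.
Proof. by move=> kb; rewrite /root_vec (nth_map 0%N) ?size_iota // nth_iota. Qed.

Lemma size_rv b : size (root_vec b) = size b.
Proof. by rewrite /root_vec size_map size_iota. Qed.

Definition mkb n (f : nat -> nat) := [seq f k | k <- iota 0 n].

Lemma size_mkb n f : size (mkb n f) = n.
Proof. by rewrite size_map size_iota. Qed.

Lemma nth_mkb n f k : (k < n)%N -> nth 0%N (mkb n f) k = f k.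
Proof. by move=> kn; rewrite (nth_map 0%N) ?size_iota // nth_iota. Qed.

Lemma nth_mkb_ge n f k : (n <= k)%N -> nth 0%N (mkb n f) k = 0%N.
Proof. by move=> kn; rewrite nth_default // size_mkb. Qed.

Definition mu (b : seq nat) := (\sum_(k < size b) k * nth 0%N b k)%N.

Lemma ferrersP (b : seq nat) :
  reflect (forall k, (k.+1 < size b)%N -> (nth 0%N b k <= nth 0%N b k.+1)%N) (ferrers b).
Proof. exact: sortedP. Qed.

Lemma mu_mkb n f : mu (mkb n f) = (\sum_(k < n) k * f k)%N.
Proof.
rewrite /mu -(big_mkord xpredT (fun k => k * nth 0%N (mkb n f) k)%N) size_mkb big_mkord.
by apply: eq_bigr => k _; rewrite nth_mkb.
Qed.

Definition tau (i l k : nat) : nat := if k == i then l else if k == l then i else k.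

Lemma swap_step (b : seq nat) (i l : nat) :
  ferrers b -> (i < l)%N -> (l < size b)%N -> (0 < i)%N ->
  nth 0 (root_vec b) l <= nth 0 (root_vec b) i.-1 + 1 ->
  nth 0 (root_vec b) i < nth 0 (root_vec b) l ->
  ((l.+1 < size b)%N -> nth 0 (root_vec b) l.+1 <= nth 0 (root_vec b) i + 1) ->
  exists b', [/\ size b' = size b, ferrers b', rg_edge b b',
    (forall k, nth 0 (root_vec b') k = nth 0 (root_vec b) (tau i l k)) &
    (mu b < mu b')%N].
Proof.
move=> fb il ln i0 C1 ac C2.
case: i il i0 C1 ac C2 => // i il _ C1 ac C2; rewrite /= in C1.
set n := size b.
have i1n : (i < n)%N by lia.
have in_ : (i.+1 < n)%N by lia.
move: C1 ac; rewrite !nth_rv // => C1 ac.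
have {}C2 : (l.+1 < size b)%N ->
    (l.+1)%:Z - (nth 0%N b l.+1)%:Z <= (i.+1)%:Z - (nth 0%N b i.+1)%:Z + 1.
  by move=> H; move: (C2 H); rewrite !nth_rv.
set d := ((nth 0%N b i.+1 + l) - (i.+1 + nth 0%N b l))%N.
set f := fun k => if k == i.+1 then (nth 0%N b i.+1 - d)%N else if k == l then (nth 0%N b l + d)%N
   else nth 0%N b k.
exists (mkb n f).
have fer : forall k, (k.+1 < n)%N -> (nth 0%N b k <= nth 0%N b k.+1)%N by apply/ferrersP.
have bil : (nth 0%N b i.+1 <= nth 0%N b l)%N.
  by apply: (sorted_leq_nth leq_trans leqnn) => //; rewrite ?inE /=; lia.
have fi1 := fer i in_.
have dp : (0 < d)%N by rewrite /d; lia.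
have dle : (d <= nth 0%N b i.+1)%N by rewrite /d; lia.
split.
- exact: size_mkb.
- apply/ferrersP => k; rewrite size_mkb => kn; rewrite !nth_mkb //; last by lia.
  have fk := fer k kn.
  rewrite /f; rewrite !eqSS.
  case: (k =P l) => [kl|kl].
    subst k; have C2' := C2 kn.
    case: (l =P i.+1) => [?|_]; first by lia.
    case: (l =P i) => [?|_]; first by lia.
    case: (l.+1 =P l) => [?|_]; first by lia.
    rewrite /d; lia.
  case: (k =P i.+1) => [ki|ki].
    subst k; case: (i.+1 =P i) => [?|_]; first by lia.
    case: (i.+2 =P l) => [?|_]; rewrite /d; lia.
  case: (k =P i) => [ki'|ki'].
    subst k; rewrite /d; lia.
  case: (k.+1 =P l) => [kl1|_]; rewrite /d; [subst l|]; lia.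
- rewrite /rg_edge size_mkb maxnn /pad subnn /= size_mkb subnn /=.
  exists i.+1, l, d; split.
  + by rewrite in_ dp /= -/n; lia.
  + by rewrite nth_mkb // /f eqxx; lia.
  + rewrite nth_mkb; last by lia.
    by rewrite /f; case: (l =P i.+1) => [?|_]; [lia | rewrite eqxx].
  + move=> k /negPf k1 /negPf k2.
    case: (ltnP k n) => kn.
      by rewrite nth_mkb // /f k1 k2.
    by rewrite nth_mkb_ge // nth_default.
- move=> k; case: (ltnP k n) => kn.
    have tn : (tau i.+1 l k < n)%N by rewrite /tau; case: (k =P i.+1) => _ //; case: (k =P l).
    rewrite !nth_rv ?size_mkb // nth_mkb // /f /tau.
    case: (k =P i.+1) => [->|_]; first by rewrite /d; lia.
    case: (k =P l) => [->|_]; first by rewrite /d; lia.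
    by [].
  have tk : tau i.+1 l k = k.
    by rewrite /tau; case: (k =P i.+1) => [?|_]; [lia|]; case: (k =P l) => [?|_]; [lia|].
  by rewrite tk !nth_default ?size_rv ?size_mkb.
- have split2 : forall F : nat -> nat, (\sum_(k < n) F k =
     F i.+1 + F l + \sum_(k < n | (k != i.+1 :> nat) && (k != l :> nat)) F k)%N.
    move=> F; rewrite (bigD1 (Ordinal in_)) //= (bigD1 (Ordinal ln)) /=; last by
      apply/eqP => /(congr1 val) /=; lia.
    rewrite addnA; congr (_ + _ + _); apply: eq_bigl => k.
  rewrite mu_mkb /mu -/n (split2 (fun k => k * nth 0%N b k)%N) (split2 (fun k => k * f k)%N).
  have -> : (\sum_(k < n | (k != i.+1 :> nat) && (k != l :> nat)) k * f k =
     \sum_(k < n | (k != i.+1 :> nat) && (k != l :> nat)) k * nth 0%N b k)%N.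
    by apply: eq_bigr => k /andP[/negPf k1 /negPf k2]; rewrite /f k1 k2.
  rewrite /f eqxx; case: (l =P i.+1) => [?|_]; first by lia.
  rewrite eqxx mulnBr mulnDr.
  have : (i.+1 * d < l * d)%N by rewrite ltn_pmul2r.
  have : (i.+1 * d <= i.+1 * nth 0%N b i.+1)%N by rewrite leq_mul2l dle orbT.
  lia.
Qed.

Lemma tauK i l : involutive (tau i l).
Proof.
move=> k; rewrite /tau.
case: (k =P i) => [->|ki]; first by rewrite eqxx; case: (l =P i).
case: (k =P l) => [->|kl]; first by rewrite eqxx.
by move/eqP/negPf: ki => ->; move/eqP/negPf: kl => ->.
Qed.

Lemma perm_tau (b b' : seq nat) i l : size b' = size b -> (i < size b)%N -> (l < size b)%N ->
  (forall k, nth 0 (root_vec b') k = nth 0 (root_vec b) (tau i l k)) ->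
  perm_eq (root_vec b') (root_vec b).
Proof.
move=> sz ib lb H.
rewrite -(mkseq_nth 0 (root_vec b')) -(mkseq_nth 0 (root_vec b)) !size_rv sz /mkseq.
have -> : [seq nth 0 (root_vec b') k | k <- iota 0 (size b)] =
          [seq nth 0 (root_vec b) k | k <- [seq tau i l k | k <- iota 0 (size b)]].
  by rewrite -map_comp; apply: eq_map => k /=.
apply: perm_map; apply: uniq_perm.
- by rewrite map_inj_uniq ?iota_uniq //; apply: can_inj (tauK i l).
- exact: iota_uniq.
- move=> k; rewrite -{1}(tauK i l k) mem_map; last exact: can_inj (tauK i l).
  rewrite !mem_iota !add0n /tau.
  case: (k =P i) => [->|_]; first by rewrite ib lb.
  case: (k =P l) => [->|_]; first by rewrite ib lb.
  by [].
Qed.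

Lemma inv_dec (X : nat -> int) n j : (j < n)%N -> (forall k, (k < n)%N -> X k <= X j) ->
  (forall i i', (j <= i)%N -> (i <= i')%N -> (i' < n)%N -> X i' <= X i) \/
  exists i l, [/\ (j < i)%N, (i < l)%N, (l < n)%N, X i < X l &
     (X l <= X i.-1 + 1 /\ ((l.+1 < n)%N -> X l.+1 <= X i + 1))].
Proof.
move=> jn Xmax.
set P := fun l => (l < n)%N && [exists i : 'I_n, (j < i < l)%N && (X i < X l)].
case: (boolP [exists l : 'I_n, P l]) => [/existsP ex|nex]; last first.
  left => i i' ji ii' i'n.
  case: (ltngtP j i) => [ji'|ij|<-]; [|by rewrite leqNgt ij in ji|exact: Xmax].
  case: (ltngtP i i') => [ii''|ii2|<-//].
    have := negP (existsPn nex (Ordinal i'n)); rewrite /P i'n /= => H.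
    rewrite leNgt; apply/negP => lt; apply: H; apply/existsP.
    exists (Ordinal (leq_ltn_trans ii' i'n)); by rewrite /= ji' ii'' lt.
  by rewrite leqNgt ii2 in ii'.
right.
have exP : exists l, P l by case: ex => l Pl; exists l.
have ubP : forall l, P l -> (l <= n)%N by move=> l /andP[/ltnW].
case: (ex_maxnP exP ubP) => l /andP[ln /existsP[i0 /andP[i0l Xi0]]] lmax.
set Q := fun i => (j < i < l)%N && (X i < X l).
have exQ : exists i, Q i by exists i0; rewrite /Q i0l.
case: (ex_minnP exQ) => i /andP[/andP[ji il] Xil] imin.
exists i, l; split => //; split.
- case: (ltngtP j i.-1) => [ji1|ji1|ji1].
  + have : ~~ Q i.-1.
      apply/negP => /imin; case: i ji il Xil imin ji1 => //= i _ _ _ _ _; by rewrite ltnn.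
    rewrite /Q ji1 /= => /negP H.
    have : ~~ (X i.-1 < X l) by apply/negP => h; apply: H; rewrite h andbT; lia.
    rewrite -leNgt => h; lra.
  + lia.
  + rewrite -ji1; have := Xmax l ln; lra.
- move=> l1n.
  have : ~~ P l.+1 by apply/negP => /lmax; rewrite ltnn.
  rewrite /P l1n /= => /existsPn /(_ (Ordinal (ltn_trans il ln))) /=.
  rewrite ji /= ltnS (ltnW il) /= -leNgt => h; lra.
Qed.

Lemma abs_le_sum (s : seq int) z : z \in s -> (`|z| <= \sum_(y <- s) `|y|)%N.
Proof. by move=> zs; rewrite (big_rem z zs) /=; apply: leq_addr. Qed.

Definition bnd (B : seq nat) := (size B * (size B * (size B + \sum_(y <- root_vec B) `|y|)))%N.

Lemma mu_bound (B b : seq nat) : size b = size B -> perm_eq (root_vec b) (root_vec B) ->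
  (mu b <= bnd B)%N.
Proof.
move=> sz pe.
set L := (\sum_(y <- root_vec B) `|y|)%N.
apply: (@leq_trans (\sum_(k < size b) size B * (size B + L))%N).
  apply: leq_sum => k _.
  apply: leq_mul; first by rewrite -sz ltnW.
  have kb : (k < size b)%N by [].
  have Xin : nth 0 (root_vec b) k \in root_vec B.
    by rewrite -(perm_mem pe) mem_nth // size_rv.
  have := abs_le_sum Xin; rewrite nth_rv // -/L => h.
  lia.
by rewrite sum_nat_const card_ord sz.
Qed.

Lemma main_ind (B : seq nat) j : ferrers B -> (j < size B)%N ->
  forall t b, ferrers b -> size b = size B -> perm_eq (root_vec b) (root_vec B) ->
  (forall k, (k <= j)%N -> nth 0 (root_vec b) k = nth 0 (root_vec B) k) ->
  (forall k, (k < size B)%N -> nth 0 (root_vec b) k <= nth 0 (root_vec b) j) ->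
  (bnd B - mu b)%N = t ->
  exists B' : seq nat,
    [/\ [/\ size B' = size B, ferrers B' & rook_equiv B B'],
        rg_connected B b B',
        (forall i, (i <= j)%N -> nth 0 (root_vec B') i = nth 0 (root_vec B) i) &
        (forall i i', (j <= i)%N -> (i <= i')%N -> (i' < size B)%N ->
           nth 0 (root_vec B') i' <= nth 0 (root_vec B') i)].
Proof.
move=> fB jn t; elim/ltn_ind: t => t IH b fb sz pe pre mx bt.
have vb : rg_vertex B b.
  by split => //; apply: rook_equiv_perm => //; rewrite perm_sym.
case: (inv_dec jn mx) => [dec|[i [l [ji il ln Xil [C1 C2]]]]].
  by exists b; split => //; [case: vb | constructor].
have lb : (l < size b)%N by rewrite sz.
have ib : (i < size b)%N by lia.
have i0 : (0 < i)%N by lia.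
have C2' : (l.+1 < size b)%N -> nth 0 (root_vec b) l.+1 <= nth 0 (root_vec b) i + 1.
  by rewrite sz; apply: C2.
have [b' [sz' fb' edge tauE mub]] := swap_step fb il lb i0 C1 Xil C2'.
have pe' : perm_eq (root_vec b') (root_vec B).
  exact: perm_trans (perm_tau sz' ib lb tauE) pe.
have mub' : (mu b' <= bnd B)%N by apply: mu_bound => //; rewrite sz'.
have sz'' : size b' = size B by rewrite sz'.
have tauj : forall k, (k <= j)%N -> tau i l k = k.
  move=> k kj; rewrite /tau; case: (k =P i) => [?|_]; first by lia.
  by case: (k =P l) => [?|_]; first by lia.
have lt : (bnd B - mu b' < t)%N by lia.
have pre' : forall k, (k <= j)%N -> nth 0 (root_vec b') k = nth 0 (root_vec B) k.
  by move=> k kj; rewrite tauE tauj // pre.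
have mx' : forall k, (k < size B)%N -> nth 0 (root_vec b') k <= nth 0 (root_vec b') j.
  move=> k kn; rewrite tauE (tauE j) (tauj j (leqnn j)); apply: mx.
  rewrite /tau; case: (k =P i) => [_|_]; first by lia.
  by case: (k =P l) => [_|_]; first by lia.
have [B' [H1 H2 H3 H4]] := IH (bnd B - mu b')%N lt b' fb' sz'' pe' pre' mx' erefl.
exists B'; split => //.
apply: (rgc_step vb _ edge H2).
by split => //; apply: rook_equiv_perm => //; rewrite perm_sym.
Qed.

Local Close Scope ring_scope.
Unset Implicit Arguments.

(* j is 0-based here: position j+1 in the paper. *)
Theorem lemma8 (B : seq nat) (j : nat) :
  ferrers B ->
  (j < size B)%N ->
  (forall i, (i < size B)%N -> (nth 0%R (root_vec B) i <= nth 0%R (root_vec B) j)%R) ->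
  (forall i, (i < j)%N -> (nth 0%R (root_vec B) i < nth 0%R (root_vec B) j)%R) ->
  exists B' : seq nat,
    [/\ [/\ size B' = size B, ferrers B' & rook_equiv B B'],
        rg_connected B B B',
        (forall i, (i <= j)%N -> nth 0%R (root_vec B') i = nth 0%R (root_vec B) i) &
        (forall i i', (j <= i)%N -> (i <= i')%N -> (i' < size B)%N ->
           (nth 0%R (root_vec B') i' <= nth 0%R (root_vec B') i)%R)].
Proof.
move=> fB jn mx _.
exact: (main_ind fB jn fB erefl (perm_refl _) (fun _ _ => erefl) mx erefl).
Qed.
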